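(* Let $(A,\{m_k\}_{k\ge0})$ be a $\mathbb Z_2$-graded filtered $A_\infty$-algebra over $\Lambda_0$ with a unit $\mathbf 1$, free of finite rank with a basis consisting of $\mathbf 1$, a finite set $\{X_e\}_{e\in E}$ of odd-degree elements, a set $\{X_f\}_{f\in F}$ of even-degree elements, and possibly further odd-degree elements (e.g. $A$ is the Floer cochain complex of a compact immersed Lagrangian, with $X_e$ the odd-degree immersed generators). Let $K=\Lambda_0\langle\langle x_e:e\in E\rangle\rangle$ be the algebra of noncommutative formal power series in variables $x_e$ of degree $0$, and extend the $A_\infty$-operations to $K\widehat\otimes_{\Lambda_0}A$ by the rule $m_k(f_1Y_1,\dots,f_kY_k)=f_k\cdots f_1\,m_k(Y_1,\dots,Y_k)$ for $f_j\in K$. Put $b=\sum_{e\in E}x_eX_e$ and write $$m_0^b:=\sum_{k\ge0}m_k(b,\dots,b)=W\cdot\mathbf 1+\sum_{f\in F}P_f\,X_f\qquad(W,P_f\in K).$$ Let $\mathcal A=K/\langle P_f:f\in F\rangle$, the quotient by the completed two-sided ideal generated by the $P_f$. Then the image of $W$ in $\mathcal A$ is central: $W\cdot x_e=x_e\cdot W$ in $\mathcal A$ for every $e\in E$.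
   Context: The $A_\infty$-operations $m_k$ have degree one with respect to the shifted grading $|v|'=|v|-1$ and satisfy the $A_\infty$-equations $\sum_{k_1+k_2=n+1}\sum_i(-1)^{\sum_{j<i}|v_j|'}m_{k_1}(v_1,\dots,m_{k_2}(v_i,\dots,v_{i+k_2-1}),\dots,v_n)=0$. An element $\mathbf 1$ of degree $0$ is a unit if $m_2(\mathbf 1,v)=v$, $(-1)^{|w|}m_2(w,\mathbf 1)=w$ for all $v,w$, and $m_k(\dots,\mathbf 1,\dots)=0$ for $k\neq2$. Since $b$ has odd degree, $m_0^b$ has even degree, so its expansion in the basis involves only $\mathbf 1$ and the even elements $X_f$. The sum defining $m_0^b$ converges in $K\widehat\otimes A$ because $m_k(b,\dots,b)$ is homogeneous of degree $k$ in the variables $x_e$. The completed two-sided ideal $\langle P_f\rangle$ is the closure of the two-sided ideal generated by the $P_f$. *)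

(* Defs.v *)
From HB Require Import structures.
From mathcomp Require Import all_boot all_algebra.
Set Implicit Arguments. Unset Strict Implicit. Unset Printing Implicit Defensive.
Import GRing.Theory.
Local Open Scope ring_scope.

(* Noncommutative formal power series R<<x_e : e in E>>, represented  *)
(* by their coefficient function on words (seq E).  The word          *)
(* [:: e1; ...; en] stands for the monomial x_e1 x_e2 ... x_en.        *)

Definition ncps (R : Type) (E : Type) := seq E -> R.

Definition ncmul (R : comNzRingType) (E : Type) (f g : ncps R E) : ncps R E :=
  fun w => \sum_(i < (size w).+1) f (take i w) * g (drop i w).

Definition ncone (R : comNzRingType) (E : Type) : ncps R E :=
  fun w => (size w == 0%N)%:R.

Definition ncvar (R : comNzRingType) (E : eqType) (e : E) : ncps R E :=
  fun w => (w == [:: e])%:R.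

Definition ncsub (R : comNzRingType) (E : Type) (f g : ncps R E) : ncps R E :=
  fun w => f w - g w.

(* f_k * ... * f_2 * f_1  for fs = [:: f_1; ...; f_k] (reversed order) *)
Definition nc_rprod (R : comNzRingType) (E : Type) (fs : seq (ncps R E)) : ncps R E :=
  foldl (fun acc f => ncmul f acc) (@ncone R E) fs.

(* x-adically convergent sum  sum_k t_k , for a sequence t with t_k of
   order >= k (i.e. t_k vanishes on words of length < k): the coefficient
   at a word w only receives contributions from k <= size w. *)
Definition ncsum (R : comNzRingType) (E : Type) (t : nat -> ncps R E) : ncps R E :=
  fun w => \sum_(k < (size w).+1) t k w.

Definition nc_ideal (R : comNzRingType) (E : Type) (I : Type)
    (P : I -> ncps R E) (Fp : I -> bool) (h : ncps R E) : Prop :=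
  exists ts : seq (ncps R E * I * ncps R E),
    all (fun t => Fp t.1.2) ts /\
    forall w, h w = \sum_(t <- ts) ncmul (ncmul t.1.1 (P t.1.2)) t.2 w.

(* Closure of that ideal in the x-adic topology of R<<x>>:
   g agrees with an element of the ideal up to any given order. *)
Definition nc_closed_ideal (R : comNzRingType) (E : Type) (I : Type)
    (P : I -> ncps R E) (Fp : I -> bool) (g : ncps R E) : Prop :=
  forall N : nat, exists h, nc_ideal P Fp h /\
    forall w, (size w < N)%N -> g w = h w.

(* Z2-graded unital A_infinity algebra, free of finite rank over R,   *)
(* given by structure constants in a homogeneous basis I:             *)
(*   m_k(Y_{s_1},...,Y_{s_k}) = sum_j c s j * Y_j   (k = size s).      *)
(* deg i = true  iff  Y_i has odd degree.  u indexes the unit 1.       *)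

Definition is_unital_Z2_Ainf (R : comNzRingType) (I : finType) (deg : I -> bool)
    (u : I) (c : seq I -> I -> R) : Prop :=
  [/\ (* m_k has degree one for the shifted grading |v|' = |v| - 1 *)
      (forall s j, c s j != 0 -> deg j = odd (size s + count deg s)),
      (* A_infinity equations on basis elements *)
      (forall s j,
         \sum_(k2 < (size s).+1) \sum_(i < (size s - k2).+1)
            (-1) ^+ count (fun t => ~~ deg t) (take i s) *
            \sum_(l : I) c (take i s ++ l :: drop (i + k2) s) j
                         * c (take k2 (drop i s)) l = 0),
      deg u = false &
    [/\
      (forall i j, c [:: u; i] j = (i == j)%:R),
      (forall i j, (-1) ^+ deg i * c [:: i; u] j = (i == j)%:R) &
      (forall s j, u \in s -> size s != 2%N -> c s j = 0)]].

(* Extension of m_k to K ^(x) A = (I -> K):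
   m_k(f_1 Y_1, ..., f_k Y_k) = f_k ... f_1 m_k(Y_1, ..., Y_k). *)
Definition mK (R : comNzRingType) (I : finType) (E : Type) (c : seq I -> I -> R)
    (v : seq (I -> ncps R E)) (j : I) : ncps R E :=
  fun w => \sum_(s : (size v).-tuple I)
             nc_rprod [seq vp.1 vp.2 | vp <- zip v s] w * c s j.

Definition bvec (R : comNzRingType) (I : finType) (E : finType) (Xe : E -> I)
    : I -> ncps R E :=
  fun i w => \sum_(e : E | Xe e == i) ncvar R e w.

Definition m0b (R : comNzRingType) (I : finType) (E : finType)
    (c : seq I -> I -> R) (Xe : E -> I) : I -> ncps R E :=
  fun j => ncsum (fun k => mK c (nseq k (bvec R Xe)) j).

(* F = the even basis elements other than the unit; P_f = m0b f *)
Definition Fidx (I : finType) (deg : I -> bool) (u : I) : I -> bool :=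
  fun i => ~~ deg i && (i != u).

(* Main.v *)
Require Import Defs.
From HB Require Import structures.
From mathcomp Require Import all_boot all_algebra.
From mathcomp Require Import zify.
Import GRing.Theory.
Local Open Scope ring_scope.
Set Implicit Arguments. Unset Strict Implicit. Unset Printing Implicit Defensive.

Lemma bvec_eval (R : comNzRingType) (I E : finType) (Xe : E -> I) (i : I) (v : seq E) :
  injective Xe ->
  bvec R Xe i v = if v is [:: x] then (Xe x == i)%:R else 0.
Proof.
move=> inj; rewrite /bvec /ncvar.
case: v => [|x [|y v]].
- by rewrite big1.
- case: (boolP (Xe x == i)) => Hx.
  + rewrite (bigD1 x) //= eqxx big1 ?addr0 // => e /andP[_ ne].
    by rewrite eqseq_cons andbT eq_sym (negbTE ne).
  + rewrite big1 // => e He; rewrite eqseq_cons andbT.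
    have -> : (x == e) = false by apply/negP => /eqP exe; rewrite exe He in Hx.
    by [].
- by rewrite big1 // => e _; rewrite eqseq_cons andbF.
Qed.

Lemma rprod_eval (R : comNzRingType) (I E : finType) (Xe : E -> I) (t : seq I) (w : seq E) :
  injective Xe ->
  nc_rprod [seq bvec R Xe i | i <- t] w = (map Xe (rev w) == t)%:R.
Proof.
move=> inj; elim/last_ind: t w => [|t i IH] w.
  rewrite /nc_rprod /= /ncone; case: w => //= x w.
  by rewrite rev_cons map_rcons; case: (map _ _).
rewrite /nc_rprod map_rcons foldl_rcons -/(nc_rprod _) /ncmul.
case: w => [|x w].
  by rewrite big_ord_recl big_ord0 bvec_eval //= mul0r addr0 /=; by case: (t).
rewrite big_ord_recl bvec_eval // mul0r add0r big_ord_recl.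
rewrite /bump /= (bvec_eval _ _ _ inj) /= IH drop0 add0n take0 /=.
rewrite big1 ?addr0.
  rewrite rev_cons map_rcons eqseq_rcons.
  by case: (_ == t); case: (_ == i); rewrite ?mulr0 ?mul0r ?mulr1.
move=> [q Hq] _ /=. rewrite /bump /= add0n add1n.
case: w Hq => [|y w] //= Hq.
by rewrite bvec_eval // mul0r.
Qed.

Lemma sum_tuple_pick (R : comNzRingType) (I : finType) n (x : seq I) (F : seq I -> R) :
  \sum_(s : n.-tuple I) (x == s :> seq I)%:R * F s = if size x == n then F x else 0.
Proof.
case: eqP => Hx.
  have Hx' : size x == n by apply/eqP.
  rewrite (bigD1 (Tuple Hx')) //= eqxx mul1r big1 ?addr0 // => s ne.
  have -> : (x == s :> seq I) = false.
    apply/negP => /eqP exs; move: ne; apply/negP; rewrite negbK.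
    by apply/eqP; apply: val_inj; rewrite /= exs.
  by rewrite mul0r.
rewrite big1 // => s _.
have -> : (x == s :> seq I) = false.
  by apply/negP => /eqP exs; apply: Hx; rewrite exs size_tuple.
by rewrite mul0r.
Qed.

Lemma zip_map_b (A B : Type) (f : B -> A) k (s : seq B) :
  size s = k ->
  [seq vp.1 vp.2 | vp <- zip (nseq k f) s] = [seq f i | i <- s].
Proof.
elim: k s => [|k IH] [|z s] //= [Hs].
by rewrite IH.
Qed.

Lemma mK_eval (R : comNzRingType) (I E : finType) (c : seq I -> I -> R) (Xe : E -> I)
   k j w :
  injective Xe ->
  mK c (nseq k (bvec R Xe)) j w = if size w == k then c (rev (map Xe w)) j else 0.
Proof.
move=> inj; rewrite /mK.
under eq_bigr => s _ do rewrite (zip_map_b _ (etrans (size_tuple s) (size_nseq _ _))) rprod_eval //.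
by rewrite (@sum_tuple_pick R I (size (nseq k (bvec R Xe))) [seq Xe i | i <- rev w] (fun s => c s j)) size_map size_rev map_rev size_nseq.
Qed.

Lemma m0b_eval (R : comNzRingType) (I E : finType) (c : seq I -> I -> R) (Xe : E -> I) j w :
  injective Xe -> m0b c Xe j w = c (rev (map Xe w)) j.
Proof.
move=> inj; rewrite /m0b /ncsum big_ord_recr /= mK_eval //.
rewrite eqxx big1 ?add0r // => k _.
by rewrite mK_eval // (gtn_eqF (ltn_ord k)).
Qed.

Lemma tri (R : comNzRingType) n (F : nat -> nat -> R) :
  \sum_(0 <= a < n.+1) \sum_(0 <= b < (n - a).+1) F a b =
  \sum_(0 <= b < n.+1) \sum_(0 <= a < (n - b).+1) F a b.
Proof.
have H : forall G : nat -> nat -> R,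
    \sum_(0 <= a < n.+1) \sum_(0 <= b < (n - a).+1) G a b =
    \sum_(0 <= a < n.+1) \sum_(0 <= b < n.+1) (if (a + b <= n)%N then G a b else 0).
  move=> G; apply: eq_big_nat => a /andP[_ Ha].
  have Hle : ((n - a).+1 <= n.+1)%N by rewrite ltnS leq_subr.
  rewrite (big_nat_widen _ _ _ _ _ Hle) big_mkcond /=.
  apply: eq_big_nat => b _ /=; rewrite ltnS leq_subRL //.
rewrite H (H (fun b a => F a b)) exchange_big /=.
apply: eq_bigr => b _; apply: eq_bigr => a _; by rewrite addnC.
Qed.

Lemma key_sum (R : comNzRingType) n (H : nat -> nat -> R) :
  \sum_(0 <= k < n.+1) \sum_(0 <= i < (n - k).+1) H (n - i - k)%N (n - i)%N =
  \sum_(0 <= q < n.+1) \sum_(0 <= p < q.+1) H p q.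
Proof.
rewrite (@tri R n (fun k i => H (n - i - k)%N (n - i)%N)) big_nat_rev.
apply: eq_big_nat => q /andP[_ Hq]; rewrite ltnS in Hq.
rewrite add0n subSS subKn // big_nat_rev.
apply: eq_big_nat => k /andP[_ Hk]; rewrite ltnS in Hk.
by rewrite add0n subSS subKn.
Qed.

Lemma collapse (R : comNzRingType) (T : eqType) (L : seq T) (x : T) (F : T -> R) :
  uniq L -> x \in L -> \sum_(y <- L) (x == y)%:R * F y = F x.
Proof.
move=> uL xL; rewrite (bigD1_seq x) //= eqxx mul1r big1 ?addr0 // => y ne.
by rewrite eq_sym (negbTE ne) mul0r.
Qed.


Lemma cU1 (R : comNzRingType) (I E : finType) (deg : I -> bool) (u : I)
    (c : seq I -> I -> R) (Xe : E -> I) e suf :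
  injective Xe -> (forall e, deg (Xe e) = true) ->
  (forall i j, (-1) ^+ deg i * c [:: i; u] j = (i == j)%:R) ->
  (forall s j, u \in s -> size s != 2%N -> c s j = 0) ->
  c (rev (map Xe suf) ++ [:: u]) (Xe e) = - (suf == [:: e])%:R.
Proof.
move=> inj degX ax5 ax6.
case: suf => [|x [|y suf]].
- by rewrite /= ax6 ?mem_head // oppr0.
- rewrite eqseq_cons andbT; have := ax5 (Xe x) (Xe e); rewrite degX expr1 mulN1r inj_eq // => <-.
  by rewrite opprK.
- rewrite ax6 ?eqseq_cons ?andbF ?oppr0 //.
    by rewrite mem_cat mem_head orbT.
  rewrite size_cat size_rev size_map /=; lia.
Qed.

Lemma cU2 (R : comNzRingType) (I E : finType) (u : I)
    (c : seq I -> I -> R) (Xe : E -> I) e suf pre :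
  injective Xe ->
  (forall i j, c [:: u; i] j = (i == j)%:R) ->
  (forall s j, u \in s -> size s != 2%N -> c s j = 0) ->
  pre != [::] ->
  c (rev (map Xe suf) ++ u :: rev (map Xe pre)) (Xe e) =
    if suf == [::] then (pre == [:: e])%:R else 0.
Proof.
move=> inj ax4 ax6.
have um : forall s t, u \in s ++ u :: t by move=> s t; rewrite mem_cat mem_head orbT.
case: pre => [//|x [|y pre]] _; case: suf => [|z suf].
- by rewrite /= ax4 inj_eq // eqseq_cons andbT.
- rewrite ax6 //; rewrite !(size_cat, size_rev, size_map) /= ?size_rev /= ?size_map; lia.
- rewrite ax6 ?eqseq_cons ?andbF //; rewrite !(size_cat, size_rev, size_map) /= ?size_rev /= ?size_map; lia.
- rewrite ax6 //; rewrite !(size_cat, size_rev, size_map) /= ?size_rev /= ?size_map; lia.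
Qed.

Lemma codd (R : comNzRingType) (I E : finType) (deg : I -> bool)
    (c : seq I -> I -> R) (Xe : E -> I) v l :
  (forall e, deg (Xe e) = true) ->
  (forall s j, c s j != 0 -> deg j = odd (size s + count deg s)) ->
  deg l = true -> c (rev (map Xe v)) l = 0.
Proof.
move=> degX ax1 dl; apply/eqP; apply/negP => H; move/negP: H => H; move: (ax1 _ _ H).
rewrite dl count_rev count_map size_rev size_map.
have -> : count (preim Xe deg) v = size v.
  by rewrite -(count_predT v); apply: eq_count => x /=; rewrite /preim degX.
by rewrite addnn odd_double.
Qed.

Fixpoint allw (E : finType) (k : nat) : seq (seq E) :=
  if k is k'.+1 then [::] :: [seq x :: v | x <- enum E, v <- allw E k'] else [:: [::]].

Lemma allwP (E : finType) k (w : seq E) : (size w <= k)%N -> w \in allw E k.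
Proof.
elim: k w => [|k IH] [|x w] //=; try by rewrite ?inE ?eqxx.
rewrite ltnS => Hw; rewrite in_cons; apply/orP; right.
by apply/allpairsP; exists (x, w); rewrite mem_enum IH.
Qed.

Definition ncd (R : comNzRingType) (E : eqType) (w1 : seq E) : ncps R E :=
  fun w => (w == w1)%:R.

Lemma ncmul3 (R : comNzRingType) (E : Type) (a P b : ncps R E) w :
  ncmul (ncmul a P) b w = \sum_(0 <= q < (size w).+1) \sum_(0 <= p < q.+1)
     a (take p (take q w)) * P (drop p (take q w)) * b (drop q w).
Proof.
rewrite /ncmul big_mkord; apply: eq_bigr => [[q Hq]] _ /=.
rewrite size_takel; last by rewrite -ltnS.
by rewrite big_mkord big_distrl.
Qed.

Theorem theorem3p8 (R : comNzRingType) (I E : finType) (deg : I -> bool) (u : I)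
    (c : seq I -> I -> R) (Xe : E -> I) :
  is_unital_Z2_Ainf deg u c ->
  injective Xe ->
  (forall e, deg (Xe e) = true) ->
  forall e : E,
    nc_closed_ideal (m0b c Xe) (Fidx deg u)
      (ncsub (ncmul (m0b c Xe u) (ncvar R e)) (ncmul (ncvar R e) (m0b c Xe u))).
Proof.
move=> [ax1 ax2 degu [ax4 ax5 ax6]] inj degX e N.
pose j := Xe e.
pose Bf := fun (w1 : seq E) (l : I) (w2 : seq E) => c (rev (map Xe w2) ++ l :: rev (map Xe w1)) j.
pose L := undup (allw E N).
pose Fl := [seq l <- index_enum I | Fidx deg u l].
pose ts := [seq (ncd R w1, l, Bf w1 l) | w1 <- L, l <- Fl].
exists (fun w => \sum_(t <- ts) ncmul (ncmul t.1.1 (m0b c Xe t.1.2)) t.2 w).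
split.
  exists ts; split => //.
  apply/all_allpairsP => w1 l _ /=.
  by rewrite mem_filter => /andP[].
move=> w Hw.
pose n := size w.
pose T := fun p q l => Bf (take p (take q w)) l (drop q w) * c (rev (map Xe (drop p (take q w)))) l.
have AX := ax2 (rev (map Xe w)) j.
have E1 : \sum_(k2 < (size (rev (map Xe w))).+1)
           \sum_(i < (size (rev (map Xe w)) - k2).+1)
            (-1) ^+ count (fun t => ~~ deg t) (take i (rev (map Xe w))) *
            \sum_(l : I) c (take i (rev (map Xe w)) ++ l :: drop (i + k2) (rev (map Xe w))) j
                         * c (take k2 (drop i (rev (map Xe w)))) l
   = \sum_(0 <= q < n.+1) \sum_(0 <= p < q.+1) \sum_(l : I) T p q l.
  rewrite -(@key_sum R n (fun p q => \sum_(l : I) T p q l)).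
  have sz : size (rev (map Xe w)) = n by rewrite size_rev size_map.
  rewrite sz big_mkord; apply: eq_bigr => [[k Hk]] _; rewrite big_mkord.
  apply: eq_bigr => [[i Hi]] _ /=.
  have tk : take i (rev (map Xe w)) = rev (map Xe (drop (n - i) w)).
    by rewrite take_rev size_map map_drop.
  have dk : drop (i + k) (rev (map Xe w)) = rev (map Xe (take (n - i - k) (take (n - i) w))).
    by rewrite drop_rev size_map take_takel ?leq_subr // map_take subnDA.
  have mk : take k (drop i (rev (map Xe w))) = rev (map Xe (drop (n - i - k) (take (n - i) w))).
    by rewrite drop_rev take_rev size_takel ?size_map ?leq_subr // map_drop map_take.
  rewrite tk dk mk count_rev count_map.
  rewrite (@eq_count _ _ pred0) ?count_pred0 ?expr0 ?mul1r; last first.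
    by move=> x /=; rewrite degX.
  by [].
have E2 : forall p q, \sum_(l : I) T p q l = T p q u + \sum_(l | Fidx deg u l) T p q l.
  move=> p q; rewrite (bigD1 u) //=; congr (_ + _).
  rewrite (bigID deg) /= big1 ?add0r.
    by apply: eq_bigl => l; rewrite /Fidx andbC.
  move=> l /andP[_ dl]; by rewrite /T (codd _ degX ax1 dl) mulr0.
have E3 : \sum_(0 <= q < n.+1) \sum_(0 <= p < q.+1) T p q u =
   - ncsub (ncmul (m0b c Xe u) (ncvar R e)) (ncmul (ncvar R e) (m0b c Xe u)) w.
  have sp : forall q, (q <= n)%N -> \sum_(0 <= p < q.+1) T p q u =
      - ((drop q w == [:: e])%:R * c (rev (map Xe (take q w))) u)
      + \sum_(0 <= p < q) T p.+1 q u.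
    move=> q Hq; rewrite big_nat_recl //; congr (_ + _).
    by rewrite /T /Bf take0 drop0 /= (cU1 _ _ inj degX ax5 ax6) mulNr.
  rewrite (_ : \sum_(0 <= q < n.+1) \sum_(0 <= p < q.+1) T p q u =
     \sum_(0 <= q < n.+1) (- ((drop q w == [:: e])%:R * c (rev (map Xe (take q w))) u)
      + \sum_(0 <= p < q) T p.+1 q u)); last first.
    by apply: eq_big_nat => q /andP[_ Hq]; rewrite sp.
  rewrite big_split [X in _ + X = _]big_nat_recr // [X in _ + (X + _) = _]big1_seq ?add0r; last first.
    move=> q /andP[_]; rewrite mem_index_iota => /andP[_ Hq]; rewrite big1_seq // => p /andP[_]; rewrite mem_index_iota => /andP[_ Hp].
    rewrite /T /Bf (cU2 _ _ inj ax4 ax6).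
      have -> : (drop q w == [::]) = false.
        by rewrite -size_eq0 size_drop subn_eq0 leqNgt Hq.
      by rewrite mul0r.
    by rewrite -size_eq0 size_takel ?size_takel //; apply: ltnW.
  have mk : forall F : nat -> R, \sum_(i < (size w).+1) F i = \sum_(0 <= i < n.+1) F i.
    by move=> F; rewrite big_mkord.
  rewrite /ncsub /ncmul (mk (fun i => m0b c Xe u (take i w) * ncvar R e (drop i w))).
  rewrite (mk (fun i => ncvar R e (take i w) * m0b c Xe u (drop i w))) opprB.
  rewrite [X in _ = X - _]big_nat_recl // take0 /= mul0r add0r.
  rewrite -sumrN addrC; congr (_ + _).
    apply: eq_big_nat => p /andP[_ Hp].
    rewrite /T /Bf take_size drop_size (cU2 _ _ inj ax4 ax6) /= ?m0b_eval //.
    by rewrite -size_eq0 size_takel.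
  apply: eq_big_nat => q _; by rewrite m0b_eval // mulrC.
have E4 : \sum_(t <- ts) ncmul (ncmul t.1.1 (m0b c Xe t.1.2)) t.2 w =
   \sum_(0 <= q < n.+1) \sum_(0 <= p < q.+1) \sum_(l | Fidx deg u l) T p q l.
  pose X := fun w1 l p q => ncd R w1 (take p (take q w)) * m0b c Xe l (drop p (take q w)) * Bf w1 l (drop q w).
  have ET : forall l p q, T p q l = \sum_(w1 <- L) X w1 l p q.
    move=> l p q; rewrite /X /ncd.
    under eq_bigr => w1 _ do rewrite -mulrA.
    rewrite collapse ?undup_uniq //.
      by rewrite /T m0b_eval // mulrC.
    rewrite mem_undup; apply: allwP; apply: leq_trans (ltnW Hw).
    rewrite !size_take_min; lia.
  symmetry.
  transitivity (\sum_(0 <= q < n.+1) \sum_(0 <= p < q.+1) \sum_(l <- Fl) \sum_(w1 <- L) X w1 l p q).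
    apply: eq_bigr => q _; apply: eq_bigr => p _; rewrite big_filter.
    by apply: eq_bigr => l _; rewrite ET.
  under eq_bigr => q _ do under eq_bigr => p _ do rewrite exchange_big.
  under eq_bigr => q _ do rewrite exchange_big.
  rewrite exchange_big big_allpairs_dep.
  apply: eq_bigr => w1 _.
  under eq_bigr => q _ do rewrite exchange_big.
  rewrite exchange_big; apply: eq_bigr => l _.
  by rewrite ncmul3.
set g := ncsub _ _ w in E3 *.
have H : - g + \sum_(0 <= q < n.+1) \sum_(0 <= p < q.+1) \sum_(l | Fidx deg u l) T p q l = 0.
  rewrite -E3 -big_split /= -[RHS]AX E1; apply: eq_bigr => q _.
  rewrite -big_split /=; apply: eq_bigr => p _; by rewrite E2.
have := congr1 (fun z => g + z) H; rewrite addrA addrN add0r addr0 => <-.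
by rewrite E4.
Qed.
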